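(* Let $P=\{p_1,\dots,p_n\}\subset\mathbb{R}^d$ be a finite point set spanning $\mathbb{R}^d$ affinely. Let $M\colon\mathbb{R}^{dn}\to\mathbb{R}^{\binom n2}$, $(v_1,\dots,v_n)\mapsto(\langle v_i-v_j,p_i-p_j\rangle)_{i<j}$, and $\Delta\colon\mathbb{R}^{\binom n2}\to\mathbb{R}^{\mathcal C(P)}$, $(f_{ij})\mapsto\bigl(\sum_{i<j,\ i,j\in C}w^C_{ij}f_{ij}\bigr)_{C\in\mathcal C(P)}$. Then $\operatorname{Im}M\subseteq\ker\Delta$. If moreover $P$ contains $d$ affinely independent points whose affine hull contains no other point of $P$, then $\operatorname{Im}M=\ker\Delta$.
   Context: $\mathcal C(P)$ is the set of circuits of $P$, i.e. minimal affinely dependent subsets. For a circuit $C$ there is an affine dependence $\sum_{i\in C}\alpha_ip_i=0$, $\sum_{i\in C}\alpha_i=0$, unique up to scaling with all $\alpha_i\ne0$; set $w^C_{ij}=\alpha_i\alpha_j$ for $i,j\in C$ (this is, up to scaling, the unique self-stress of the complete graph on $C$, i.e. $\sum_{j\in C}w^C_{ij}(p_i-p_j)=0$ for all $i\in C$). *)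

(* Defs.v *)
From HB Require Import structures.
From mathcomp Require Import all_boot all_order all_algebra.
From Stdlib Require Import ClassicalEpsilon.
Set Implicit Arguments. Unset Strict Implicit. Unset Printing Implicit Defensive.
Import Order.TTheory GRing.Theory Num.Theory.
Local Open Scope ring_scope.

Section Defs.
Variables (R : realFieldType) (d n : nat).
Implicit Types (p v : 'I_n -> 'rV[R]_d) (C S : {set 'I_n}) (a : 'I_n -> R).

Definition dotv (u w : 'rV[R]_d) : R := \sum_(k < d) u 0 k * w 0 k.

Definition aff_spanning p : Prop :=
  forall x : 'rV[R]_d, exists a, \sum_i a i = 1 /\ \sum_i a i *: p i = x.

Definition is_affdep p C a : Prop :=
  [/\ forall i, i \notin C -> a i = 0, exists i, a i != 0,
      \sum_i a i = 0 & \sum_i a i *: p i = 0].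

Definition aff_dependent p C : Prop := exists a, is_affdep p C a.

Definition circuit p C : Prop :=
  aff_dependent p C /\ forall D : {set 'I_n}, D \proper C -> ~ aff_dependent p D.

(* the affine dependence alpha of a circuit (chosen; unique up to scaling) *)
Definition circ_coef p C : 'I_n -> R :=
  epsilon (inhabits (fun _ : 'I_n => 0)) (is_affdep p C).

Definition wC p C (i j : 'I_n) : R := circ_coef p C i * circ_coef p C j.

(* f in R^{n choose 2} represented by its values f i j for i < j *)
Definition in_image_M p (f : 'I_n -> 'I_n -> R) : Prop :=
  exists v, forall i j : 'I_n, (i < j)%N -> f i j = dotv (v i - v j) (p i - p j).

Definition Delta p (f : 'I_n -> 'I_n -> R) C : R :=
  \sum_(i in C) \sum_(j in C | (i < j)%N) wC p C i j * f i j.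

Definition in_ker_Delta p (f : 'I_n -> 'I_n -> R) : Prop :=
  forall C, circuit p C -> Delta p f C = 0.

Definition in_aff_hull p S (x : 'rV[R]_d) : Prop :=
  exists a, [/\ forall i, i \notin S -> a i = 0, \sum_i a i = 1
              & \sum_i a i *: p i = x].

End Defs.

(* Main.v *)
Require Import Defs.
From HB Require Import structures.
From mathcomp Require Import all_boot all_order all_algebra.
From Stdlib Require Import ClassicalEpsilon.
From mathcomp Require Import ring.
Import Order.TTheory GRing.Theory Num.Theory.
Local Open Scope ring_scope.
Set Implicit Arguments. Unset Strict Implicit.

Lemma dotvC (R : realFieldType) d (u w : 'rV[R]_d) : dotv u w = dotv w u.
Proof. by apply: eq_bigr => k _; rewrite mulrC. Qed.

Lemma dotvBl (R : realFieldType) d (u u' w : 'rV[R]_d) :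
  dotv (u - u') w = dotv u w - dotv u' w.
Proof. by rewrite /dotv -sumrB; apply: eq_bigr => k _; rewrite !mxE mulrBl. Qed.

Lemma dotvBr (R : realFieldType) d (u w w' : 'rV[R]_d) :
  dotv u (w - w') = dotv u w - dotv u w'.
Proof. by rewrite dotvC dotvBl !(dotvC u). Qed.

Lemma dotvNN (R : realFieldType) d (u w : 'rV[R]_d) :
  dotv (- u) (- w) = dotv u w.
Proof. by apply: eq_bigr => k _; rewrite !mxE mulrNN. Qed.

Lemma dotv_sumr (R : realFieldType) d n (u : 'rV[R]_d) (a : 'I_n -> R) w :
  dotv u (\sum_j a j *: w j) = \sum_j a j * dotv u (w j).
Proof.
rewrite /dotv; under eq_bigr => k _ do rewrite summxE mulr_sumr.
rewrite exchange_big; apply: eq_bigr => j _; rewrite mulr_sumr.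
by apply: eq_bigr => k _; rewrite !mxE mulrCA.
Qed.

Lemma dotv_suml (R : realFieldType) d n (u : 'rV[R]_d) (a : 'I_n -> R) w :
  dotv (\sum_j a j *: w j) u = \sum_j a j * dotv (w j) u.
Proof. by rewrite dotvC dotv_sumr; under eq_bigr do rewrite dotvC. Qed.

Lemma dotv0r (R : realFieldType) d (u : 'rV[R]_d) : dotv u 0 = 0.
Proof. by rewrite /dotv big1 // => k _; rewrite mxE mulr0. Qed.

Lemma sym_half (R : realFieldType) n (h : 'I_n -> 'I_n -> R) :
  (forall i j, h i j = h j i) -> (forall i, h i i = 0) ->
  \sum_i \sum_j h i j = 2 * \sum_(i : 'I_n) \sum_(j : 'I_n | (i < j)%N) h i j.
Proof.
move=> hs h0.
have E : forall i j : 'I_n, h i j = (if (i < j)%N then h i j else 0) + (if (j < i)%N then h i j else 0).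
  move=> i j; case: (ltngtP i j) => [lt|lt|/val_inj ->]; rewrite ?addr0 ?add0r //.
transitivity (\sum_(i : 'I_n) \sum_(j : 'I_n) (if (i < j)%N then h i j else 0) +
              \sum_(i : 'I_n) \sum_(j : 'I_n) (if (j < i)%N then h i j else 0)).
  by rewrite -big_split; apply: eq_bigr => i _; rewrite -big_split; apply: eq_bigr => j _; exact: E.
rewrite [X in _ + X = _]exchange_big /=.
have -> : \sum_(j < n) \sum_(i < n) (if (j < i)%N then h i j else 0) =
          \sum_(i < n) \sum_(j < n) (if (i < j)%N then h i j else 0).
  by apply: eq_bigr => i _; apply: eq_bigr => j _; rewrite hs.
rewrite mulr2n mulrDl mul1r.
have -> : \sum_(i < n) \sum_(j < n | (i < j)%N) h i j = \sum_(i < n) \sum_(j < n) (if (i < j)%N then h i j else 0).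
  by apply: eq_bigr => i _; rewrite big_mkcond.
by [].
Qed.

Lemma circ_affdep (R : realFieldType) d n (p : 'I_n -> 'rV[R]_d) (C : {set 'I_n}) :
  circuit p C -> is_affdep p C (circ_coef p C).
Proof. by case=> hd _; rewrite /circ_coef; apply: epsilon_spec. Qed.

Lemma Delta_full (R : realFieldType) d n (p : 'I_n -> 'rV[R]_d) (C : {set 'I_n})
    (G : 'I_n -> 'I_n -> R) :
  (forall i j : 'I_n, (i \notin C) || (j \notin C) -> wC p C i j * G i j = 0) ->
  Delta p G C = \sum_(i : 'I_n) \sum_(j : 'I_n | (i < j)%N) wC p C i j * G i j.
Proof.
move=> H; rewrite /Delta big_mkcond; apply: eq_bigr => i _.
rewrite big_mkcond [RHS]big_mkcond; case: ifP => iC.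
  apply: eq_bigr => j _; have [jC|jC] := boolP (j \in C); rewrite /= ?andTb ?andFb //.
  by case: ifP => // _; rewrite H // jC orbT.
by rewrite big1 // => j _; case: ifP => // _; rewrite H // iC.
Qed.

Lemma Delta_M (R : realFieldType) d n (p : 'I_n -> 'rV[R]_d) (v : 'I_n -> 'rV[R]_d) (C : {set 'I_n}) :
  circuit p C -> Delta p (fun i j => dotv (v i - v j) (p i - p j)) C = 0.
Proof.
move=> hC; have [hout _ hs0 hsp] := circ_affdep hC.
set a := circ_coef p C in hout hs0 hsp.
rewrite Delta_full; last first.
  by move=> i j /orP[] /hout; rewrite /wC -/a => ->; rewrite ?(mul0r, mulr0).
set X := (X in X = 0).
set h := fun i j => a i * a j * dotv (v i - v j) (p i - p j).
have hsym : forall i j, h i j = h j i.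
  move=> i j; rewrite /h -dotvNN !opprB; ring.
have hdiag : forall i, h i i = 0.
  by move=> i; rewrite /h subrr /dotv big1 ?mulr0 // => k _; rewrite mxE mul0r.
have H2 := sym_half hsym hdiag.
have EX : X = \sum_(i : 'I_n) \sum_(j : 'I_n | (i < j)%N) h i j by [].
have T1 : forall F : 'I_n -> R, \sum_i \sum_j a i * a j * F i = 0.
  move=> F; transitivity (\sum_i (a i * F i) * \sum_j a j).
    by apply: eq_bigr => i _; rewrite mulr_sumr; apply: eq_bigr => j _; ring.
  by rewrite big1 // => i _; rewrite hs0 mulr0.
have T1' : forall F : 'I_n -> R, \sum_i \sum_j a i * a j * F j = 0.
  move=> F; rewrite exchange_big /=; rewrite -[RHS](T1 F).
  by apply: eq_bigr => i _; apply: eq_bigr => j _; ring.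
have T2 : \sum_i \sum_j a i * a j * dotv (v i) (p j) = 0.
  transitivity (\sum_i a i * dotv (v i) (\sum_j a j *: p j)).
    by apply: eq_bigr => i _; rewrite dotv_sumr mulr_sumr; apply: eq_bigr => j _; ring.
  by rewrite big1 // => i _; rewrite hsp dotv0r mulr0.
have T2' : \sum_i \sum_j a i * a j * dotv (v j) (p i) = 0.
  rewrite exchange_big /=; rewrite -[RHS]T2.
  by apply: eq_bigr => i _; apply: eq_bigr => j _; ring.
have HE : forall i j, h i j = a i * a j * dotv (v i) (p i) - a i * a j * dotv (v i) (p j)
    - a i * a j * dotv (v j) (p i) + a i * a j * dotv (v j) (p j).
  by move=> i j; rewrite /h dotvBl !dotvBr; ring.
have : 2 * X = 0.
  rewrite EX -H2.
  under eq_bigr => i _ do under eq_bigr => j _ do rewrite HE.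
  under eq_bigr => i _ do rewrite big_split !sumrB /=.
  by rewrite big_split !sumrB /= T1 T2 T2' (T1' (fun j => dotv (v j) (p j))); ring.
by move/eqP; rewrite mulf_eq0 pnatr_eq0 orFb => /eqP.
Qed.

Definition indep (R : realFieldType) d n (p : 'I_n -> 'rV[R]_d) (T : {set 'I_n}) :=
  forall a : 'I_n -> R, (forall i, i \notin T -> a i = 0) ->
    \sum_i a i = 0 -> \sum_i a i *: p i = 0 -> forall i, a i = 0.

Definition linindep (R : realFieldType) d n (T : {set 'I_n}) (u : 'I_n -> 'rV[R]_d) :=
  forall c : 'I_n -> R, (forall i, i \notin T -> c i = 0) ->
    \sum_i c i *: u i = 0 -> forall i, c i = 0.

Lemma nodep_indep (R : realFieldType) d n (p : 'I_n -> 'rV[R]_d) (T : {set 'I_n}) :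
  ~ aff_dependent p T -> indep p T.
Proof.
move=> H a ho hs hp i; apply/eqP/negPn/negP => nz; apply: H.
by exists a; split => //; exists i.
Qed.

Lemma indep_sub (R : realFieldType) d n (p : 'I_n -> 'rV[R]_d) (S T : {set 'I_n}) :
  T \subset S -> indep p S -> indep p T.
Proof.
move=> /subsetP sTS hS a ho; apply: hS => i iS; apply: ho.
by apply/negP => /sTS; apply/negP.
Qed.

Lemma sum_delta (R : realFieldType) n (k : 'I_n) : \sum_(i : 'I_n) (i == k)%:R = 1 :> R.
Proof. by rewrite (bigD1 k) //= eqxx big1 ?addr0 // => i /negbTE ->. Qed.

Lemma sum_deltaZ (R : realFieldType) d n (k : 'I_n) (w : 'I_n -> 'rV[R]_d) :
  \sum_(i : 'I_n) (i == k)%:R *: w i = w k.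
Proof. by rewrite (bigD1 k) //= eqxx scale1r big1 ?addr0 // => i /negbTE ->; rewrite scale0r. Qed.

Lemma indep_add (R : realFieldType) d n (p : 'I_n -> 'rV[R]_d) (S : {set 'I_n}) k :
  indep p S -> ~ in_aff_hull p S (p k) -> indep p (k |: S).
Proof.
move=> hS hk a ho hs hp.
have [ak0|akn0] := eqVneq (a k) 0.
  apply: hS => // i iS; have [->|ik] := eqVneq i k; first exact: ak0.
  by apply: ho; rewrite in_setU1 (negbTE ik) (negbTE iS).
exfalso; apply: hk.
exists (fun i => (i == k)%:R - a i / a k); split.
- move=> i iS; have [->|ik] := eqVneq i k; first by rewrite ?eqxx divff // subrr.
  by rewrite ho ?in_setU1 ?(negbTE ik) ?(negbTE iS) // mul0r subrr.
- by rewrite sumrB sum_delta -mulr_suml hs mul0r subr0.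
- rewrite (eq_bigr (fun i => (i == k)%:R *: p i - (a k)^-1 *: (a i *: p i))); last first.
    by move=> i _; rewrite scalerBl scalerA mulrC.
  by rewrite sumrB sum_deltaZ -scaler_sumr hp scaler0 subr0.
Qed.

Lemma linindep_of (R : realFieldType) d n (p : 'I_n -> 'rV[R]_d) (T : {set 'I_n}) k :
  k \notin T -> indep p (k |: T) -> linindep T (fun b => p k - p b).
Proof.
move=> kT hT c ho hs.
have ck : c k = 0 by apply: ho.
have H := hT (fun i => (i == k)%:R * (\sum_j c j) - c i).
have /H {}H : forall i, i \notin k |: T -> (i == k)%:R * (\sum_j c j) - c i = 0.
  move=> i; rewrite in_setU1 negb_or => /andP[/negbTE -> iT].
  by rewrite ho // mul0r subrr.
have /H {}H : \sum_i ((i == k)%:R * (\sum_j c j) - c i) = 0.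
  by rewrite sumrB -mulr_suml sum_delta mul1r subrr.
have /H {}H : \sum_i ((i == k)%:R * (\sum_j c j) - c i) *: p i = 0.
  rewrite -[RHS]hs.
  rewrite (eq_bigr (fun i => (\sum_j c j) *: ((i == k)%:R *: p i) - c i *: p i)); last first.
    by move=> i _; rewrite scalerBl scalerA mulrC.
  rewrite sumrB -scaler_sumr sum_deltaZ scaler_suml -sumrB.
  by apply: eq_bigr => i _; rewrite scalerBr.
move=> i; have [->//|ik] := eqVneq i k.
by have := H i; rewrite (negbTE ik) mul0r sub0r => /eqP; rewrite oppr_eq0 => /eqP.
Qed.

Lemma ord_empty (m : nat) (k : 'I_m) : m = 0%N -> False.
Proof. by move=> e; have := leq_trans (ltn_ord k) (eq_leq e). Qed.

Lemma U_free (R : realFieldType) d n (T : {set 'I_n}) (u : 'I_n -> 'rV[R]_d) :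
  linindep T u -> row_free (\matrix_(k < #|T|) u (enum_val k)).
Proof.
move=> hl; apply/inj_row_free => y hy.
case: (set_0Vmem T) => [T0 | [x0 x0T]].
  apply/rowP => k; exfalso; apply: (ord_empty k); by rewrite T0 cards0.
pose c i := if i \in T then y 0 (enum_rank_in x0T i) else 0.
have Hc := hl c.
have /Hc {}Hc : forall i, i \notin T -> c i = 0 by move=> i /negbTE iT; rewrite /c iT.
have /Hc {}Hc : \sum_i c i *: u i = 0.
  rewrite -[RHS]hy mulmx_sum_row.
  rewrite (eq_bigr (fun i => if i \in T then y 0 (enum_rank_in x0T i) *: u i else 0)); last first.
    by move=> i _; rewrite /c; case: ifP => //; rewrite scale0r.
  rewrite -big_mkcond /= big_enum_val /=.
  by apply: eq_bigr => k _; rewrite rowK enum_valK_in.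
apply/rowP => k; rewrite !mxE; have := Hc (enum_val k).
by rewrite /c enum_valP enum_valK_in.
Qed.

Lemma solve_lin (R : realFieldType) d n (T : {set 'I_n}) (u : 'I_n -> 'rV[R]_d) :
  linindep T u -> forall c : 'I_n -> R,
  exists x : 'rV[R]_d, forall i, i \in T -> dotv x (u i) = c i.
Proof.
move=> hl c; set U := \matrix_(k < #|T|) u (enum_val k).
have hf : row_full U^T by rewrite /row_full mxrank_tr; exact: U_free hl.
have /submxP[x hx] : ((\row_(k < #|T|) c (enum_val k)) <= U^T)%MS by apply: submx_full.
exists x => i iT.
have := congr1 (fun M : 'rV_#|T| => M 0 (enum_rank_in iT i)) hx.
rewrite /= !mxE enum_rankK_in // => ->.
by apply: eq_bigr => j _; rewrite !mxE enum_rankK_in.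
Qed.

Lemma span_lin (R : realFieldType) d n (T : {set 'I_n}) (u : 'I_n -> 'rV[R]_d) :
  linindep T u -> #|T| = d -> forall w : 'rV[R]_d,
  exists c : 'I_n -> R, (forall i, i \notin T -> c i = 0) /\ w = \sum_i c i *: u i.
Proof.
move=> hl hT w.
case: (set_0Vmem T) => [T0 | [x0 x0T]].
  exists (fun _ => 0); split => //; rewrite big1; last by move=> i _; rewrite scale0r.
  by apply/rowP => k; exfalso; apply: (ord_empty k); rewrite -hT T0 cards0.
set U := \matrix_(k < #|T|) u (enum_val k).
have hf : row_full U.
  by have := U_free hl; rewrite /row_free /row_full => /eqP ->; apply/eqP.
have /submxP[x hx] : (w <= U)%MS by apply: submx_full.
exists (fun i => if i \in T then x 0 (enum_rank_in x0T i) else 0); split.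
  by move=> i /negbTE ->.
rewrite hx mulmx_sum_row.
rewrite (eq_bigr (fun i => if i \in T then x 0 (enum_rank_in x0T i) *: u i else 0)); last first.
  by move=> i _; case: ifP => //; rewrite scale0r.
rewrite -big_mkcond /= [RHS]big_enum_val /=.
by apply: eq_bigr => k _; rewrite rowK enum_valK_in.
Qed.

Lemma circ_nz (R : realFieldType) d n (p : 'I_n -> 'rV[R]_d) (C : {set 'I_n}) i :
  circuit p C -> i \in C -> circ_coef p C i != 0.
Proof.
move=> hC iC; have [ho [i0 hi0] hs hp] := circ_affdep hC.
apply/negP => /eqP h0; apply: (hC.2 [set j in C | circ_coef p C j != 0]).
  apply/properP; split.
    by apply/subsetP => j; rewrite inE => /andP[].
  by exists i => //; rewrite inE h0 eqxx andbF.
exists (circ_coef p C); split => //; last by exists i0.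
move=> j; rewrite inE negb_and negbK => /orP[/ho //|/eqP //].
Qed.

Lemma Delta_single (R : realFieldType) d n (p : 'I_n -> 'rV[R]_d) (C : {set 'I_n})
    (g : 'I_n -> 'I_n -> R) (k l : 'I_n) :
  k \in C -> l \in C -> (k < l)%N ->
  (forall i j : 'I_n, i \in C -> j \in C -> (i < j)%N -> (i != k) || (j != l) -> g i j = 0) ->
  Delta p g C = wC p C k l * g k l.
Proof.
move=> kC lC kl H; rewrite /Delta (bigD1 k) //=.
have -> : \sum_(i < n | (i \in C) && (i != k)) \sum_(j in C | (i < j)%N) wC p C i j * g i j = 0.
  apply: big1 => i /andP[iC ik]; apply: big1 => j /andP[jC ij].
  by rewrite H ?mulr0 // ik.
rewrite addr0 (bigD1 l) /=; last by rewrite lC kl.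
rewrite big1 ?addr0 // => j /andP[/andP[jC kj] jl].
by rewrite H ?mulr0 // jl orbT.
Qed.

Lemma circ_supp (R : realFieldType) d n (p : 'I_n -> 'rV[R]_d) (S : {set 'I_n}) (k l : 'I_n)
    (mu : 'I_n -> R) :
  indep p (k |: S) -> (forall i, i \notin l |: (k |: S) -> mu i = 0) ->
  \sum_i mu i = 0 -> \sum_i mu i *: p i = 0 -> mu l != 0 ->
  circuit p [set i | mu i != 0].
Proof.
move=> hind ho hs hp hl; split.
  exists mu; split => //; last by exists l.
  by move=> i; rewrite inE negbK => /eqP.
move=> D /properP[/subsetP sD [x xC xD]] [nu [hno [i0 hi0] hns hnp]].
have zout : forall i, i \notin l |: (k |: S) -> nu i = 0.
  move=> i /ho mi0; apply: hno; apply/negP => /sD; rewrite inE mi0 eqxx //.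
have hnl : nu l != 0.
  apply/negP => /eqP nl0; move: hi0; rewrite (hind nu) ?eqxx //.
  move=> i iS; have [->//|il] := eqVneq i l.
  by apply: zout; rewrite in_setU1 (negbTE il) iS.
have H := hind (fun i => nu l * mu i - mu l * nu i).
have /H {}H : forall i, i \notin k |: S -> nu l * mu i - mu l * nu i = 0.
  move=> i iS; have [->|il] := eqVneq i l; first by rewrite mulrC subrr.
  have iL : i \notin l |: (k |: S) by rewrite in_setU1 (negbTE il) iS.
  by rewrite (ho i iL) (zout i iL) !mulr0 subrr.
have /H {}H : \sum_i (nu l * mu i - mu l * nu i) = 0.
  by rewrite sumrB -!mulr_sumr hs hns !mulr0 subrr.
have /H {}H : \sum_i (nu l * mu i - mu l * nu i) *: p i = 0.
  rewrite (eq_bigr (fun i => nu l *: (mu i *: p i) - mu l *: (nu i *: p i))); last first.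
    by move=> i _; rewrite scalerBl !scalerA.
  by rewrite sumrB -!scaler_sumr hp hnp !scaler0 subrr.
have := H x; move: xC; rewrite inE => mx.
have nx : nu x = 0 by apply: hno.
by rewrite nx mulr0 subr0 => /eqP; rewrite mulf_eq0 (negbTE hnl) (negbTE mx).
Qed.

Lemma simplex (R : realFieldType) d n (p : 'I_n -> 'rV[R]_d) (F : 'I_n -> 'I_n -> R)
    (T : {set 'I_n}) :
  (forall i j, F i j = F j i) -> indep p T ->
  exists v : 'I_n -> 'rV[R]_d, forall i j, i \in T -> j \in T -> i != j ->
    dotv (v i - v j) (p i - p j) = F i j.
Proof.
move=> hF; move: {2}#|T| (erefl #|T|) => m; elim: m T => [|m IH] T hm hT.
  by exists (fun _ => 0) => i j; rewrite (cards0_eq hm) inE.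
have [t tT] : exists t, t \in T by apply/card_gt0P; rewrite hm.
have hm' : #|T :\ t| = m by move: hm; rewrite (cardsD1 t) tT add1n => -[].
have hT' : indep p (T :\ t) by apply: indep_sub hT; apply: subsetDl.
have [v hv] := IH _ hm' hT'.
have hl : linindep (T :\ t) (fun b => p t - p b).
  by apply: linindep_of; [rewrite setD11 | rewrite setD1K].
have [x hx] := solve_lin hl (fun b => F t b + dotv (v b) (p t - p b)).
exists (fun i => if i == t then x else v i) => i j iT jT ij.
have [it|it] := eqVneq i t; have [jt|jt] := eqVneq j t.
- by move: ij; rewrite it jt eqxx.
- by rewrite it dotvBl hx ?addrK // in_setD1 jt jT.
- rewrite jt -dotvNN !opprB dotvBl hx; last by rewrite in_setD1 it iT.
  by rewrite addrK hF.
- by apply: hv; rewrite // in_setD1 ?it ?jt.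
Qed.

Theorem proposition6p1 (R : realFieldType) (d n : nat)
    (p : 'I_n -> 'rV[R]_d) (p_inj : injective p)
    (hspan : aff_spanning p) :
  (forall f : 'I_n -> 'I_n -> R, in_image_M p f -> in_ker_Delta p f) /\
  ((exists S : {set 'I_n}, [/\ #|S| = d, ~ aff_dependent p S &
        forall k, k \notin S -> ~ in_aff_hull p S (p k)]) ->
   forall f : 'I_n -> 'I_n -> R, in_ker_Delta p f -> in_image_M p f).
Proof.
split.
  move=> f [v hv] C hC; rewrite -(Delta_M v hC) /Delta.
  apply: eq_bigr => i _; apply: eq_bigr => j /andP[_ ij].
  by rewrite hv.
move=> [S [hcard hnd hhyp]] f hker.
have hS := nodep_indep hnd.
pose F (i j : 'I_n) := if (i < j)%N then f i j else f j i.
have hF : forall i j, F i j = F j i.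
  by move=> i j; rewrite /F; case: (ltngtP i j) => [//|//|/val_inj ->].
have [v hv] := simplex hF hS.
have hk : forall k, exists x : 'rV[R]_d, k \notin S -> forall b, b \in S ->
    dotv x (p k - p b) = F k b + dotv (v b) (p k - p b).
  move=> k; case: (boolP (k \in S)) => kS; first by exists 0.
  have hl := linindep_of kS (indep_add hS (hhyp k kS)).
  have [x hx] := solve_lin hl (fun b => F k b + dotv (v b) (p k - p b)).
  by exists x.
pose g k := proj1_sig (constructive_indefinite_description _ (hk k)).
have hg : forall k, k \notin S -> forall b, b \in S ->
    dotv (g k) (p k - p b) = F k b + dotv (v b) (p k - p b).
  by move=> k; exact: (proj2_sig (constructive_indefinite_description _ (hk k))).
pose V i := if i \in S then v i else g i.
have goodS : forall i j, i != j -> (i \in S) || (j \in S) ->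
    dotv (V i - V j) (p i - p j) = F i j.
  move=> i j ij; rewrite /V; case: (boolP (i \in S)) => iS; case: (boolP (j \in S)) => jS hs.
  - exact: hv.
  - by rewrite -dotvNN !opprB dotvBl hg // addrK hF.
  - by rewrite dotvBl hg // addrK.
  - by move: hs.
exists V => i j ij.
have nij : i != j by apply/eqP => e; move: ij; rewrite e ltnn.
have Fij : F i j = f i j by rewrite /F ij.
case: (boolP ((i \in S) || (j \in S))) => hij.
  by rewrite -Fij goodS.
move: hij; rewrite negb_or => /andP[iS jS].
have hiS := indep_add hS (hhyp i iS).
have hjS := indep_add hS (hhyp j jS).
have hl := linindep_of iS hiS.
have [c [hco hcs]] := span_lin hl hcard (p i - p j).
pose mu (t : 'I_n) := (t == i)%:R * (1 - \sum_b c b) - (t == j)%:R + c t.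
have mu_out : forall t, t \notin j |: (i |: S) -> mu t = 0.
  move=> t; rewrite !in_setU1 !negb_or => /andP[tj /andP[ti tS]].
  by rewrite /mu (negbTE ti) (negbTE tj) (hco t tS) mul0r subrr add0r.
have mu_s : \sum_t mu t = 0.
  rewrite /mu big_split sumrB /= -mulr_suml !sum_delta; ring.
have e : \sum_t c t *: p t = (\sum_t c t) *: p i - (p i - p j).
  rewrite hcs; under [X in _ = _ - X]eq_bigr => t _ do rewrite /= scalerBr.
  by rewrite sumrB -scaler_suml opprB addrCA subrr addr0.
have mu_p : \sum_t mu t *: p t = 0.
  rewrite (eq_bigr (fun t => (1 - \sum_b c b) *: ((t == i)%:R *: p t) - (t == j)%:R *: p t
                             + c t *: p t)); last first.
    by move=> t _; rewrite /mu scalerDl scalerBl scalerA mulrC.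
  rewrite big_split sumrB /= -scaler_sumr !sum_deltaZ e.
  by apply/rowP => k; rewrite !mxE; ring.
have ji : (j == i) = false by apply/negbTE; rewrite eq_sym.
have mu_j : mu j = -1 by rewrite /mu ji eqxx (hco j jS) mul0r sub0r addr0.
have mu_jn : mu j != 0 by rewrite mu_j oppr_eq0 oner_eq0.
have hC := circ_supp hiS mu_out mu_s mu_p mu_jn.
set C := [set t | mu t != 0] in hC.
have jC : j \in C by rewrite inE.
have iC : i \in C.
  rewrite inE; apply/negP => /eqP mi0.
  have := hjS mu _ mu_s mu_p j; rewrite mu_j => H.
  have : (-1 : R) = 0.
    apply: H => t; rewrite in_setU1 negb_or => /andP[tj tS].
    have [->//|ti] := eqVneq t i; apply: mu_out.
    by rewrite !in_setU1 (negbTE tj) (negbTE ti) !orFb.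
  by move/eqP; rewrite oppr_eq0 oner_eq0.
have CS : forall t, t \in C -> t \in j |: (i |: S).
  by move=> t tC; apply/negPn/negP => h; move: tC; rewrite inE (mu_out t h) eqxx.
pose h' (a b : 'I_n) := f a b - dotv (V a - V b) (p a - p b).
have D0 : Delta p h' C = 0.
  transitivity (Delta p f C - Delta p (fun a b => dotv (V a - V b) (p a - p b)) C).
    rewrite /Delta -sumrB; apply: eq_bigr => a _; rewrite -sumrB.
    by apply: eq_bigr => b _; rewrite mulrBr.
  by rewrite hker // Delta_M // subrr.
rewrite (@Delta_single _ _ _ p C h' i j iC jC ij) in D0; last first.
  move=> a b aC bC ab hab.
  have Fab : F a b = f a b by rewrite /F ab.
  have nab : a != b by apply/eqP => e'; move: ab; rewrite e' ltnn.
  case: (boolP ((a \in S) || (b \in S))) => hs.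
    by rewrite /h' -Fab goodS ?subrr.
  move: hs; rewrite negb_or => /andP[aS bS].
  move: (CS a aC) (CS b bC); rewrite !in_setU1 (negbTE aS) (negbTE bS) !orbF.
  move=> /orP[/eqP ea|/eqP ea] /orP[/eqP eb|/eqP eb]; rewrite ea eb in ab hab.
  - by rewrite ltnn in ab.
  - by have := ltn_trans ij ab; rewrite ltnn.
  - by rewrite !eqxx in hab.
  - by rewrite ltnn in ab.
have wnz : wC p C i j != 0 by rewrite /wC mulf_neq0 // circ_nz.
move/eqP: D0; rewrite mulf_eq0 (negbTE wnz) orFb /h' subr_eq0 => /eqP.
done.
Qed.
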